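(* Let $n\ge2$ and let $\Sigma=\mathbb{R}^n\subset\mathbb{R}^{n+1}$ be a hyperplane through the origin. Then the region $$\Big\{\vec x\in\Sigma:\ |\vec x|>2\sqrt{(n+2)\Big(\sqrt{\tfrac{3n+2}{n+2}}-1\Big)}\Big\}$$ is stable.
   Context: Stability operator on a self-shrinker: $Lf=\Delta f-\tfrac12\langle\vec x,\nabla f\rangle+(|A|^2+\tfrac12)f$. A region $\Omega$ is stable if there exists a function $u$ with $Lu=0$ and $u>0$ on $\Omega$. *)

(* Defs.v *)
From Stdlib Require Import Reals Lra.
Open Scope R_scope.

(* Points of R^N are modelled as nat -> R; a point of R^n is one whose
   coordinates of index >= n vanish.  The hyperplane Sigma = R^n x {0}
   inside R^{n+1} is identified with R^n (its intrinsic geometry). *)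
Definition point := nat -> R.

Definition in_Rn (n : nat) (x : point) : Prop := forall i, (n <= i)%nat -> x i = 0.

Fixpoint sum_lt (n : nat) (f : nat -> R) : R :=
  match n with O => 0 | S m => sum_lt m f + f m end.

Definition inner (n : nat) (x y : point) : R := sum_lt n (fun i => x i * y i).
Definition norm (n : nat) (x : point) : R := sqrt (inner n x x).

Definition shift (x : point) (j : nat) (t : R) : point :=
  fun i => if Nat.eqb i j then x i + t else x i.

Definition has_partial (f : point -> R) (j : nat) (x : point) (l : R) : Prop :=
  derivable_pt_lim (fun t => f (shift x j t)) 0 l.

Definition cont_at (n : nat) (f : point -> R) (x : point) : Prop :=
  forall eps, 0 < eps -> exists delta, 0 < delta /\
    forall y, in_Rn n y ->
      norm n (fun i => y i - x i) < delta -> Rabs (f y - f x) < eps.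

Definition C2_on (n : nat) (Omega : point -> Prop) (u : point -> R)
    (Du : nat -> point -> R) (H : nat -> nat -> point -> R) : Prop :=
  forall x, in_Rn n x -> Omega x ->
    (forall j, (j < n)%nat -> has_partial u j x (Du j x)) /\
    (forall i j, (i < n)%nat -> (j < n)%nat -> has_partial (Du i) j x (H i j x)) /\
    cont_at n u x /\
    (forall i, (i < n)%nat -> cont_at n (Du i) x) /\
    (forall i j, (i < n)%nat -> (j < n)%nat -> cont_at n (H i j) x).

(* Stability operator L f = Delta f - 1/2 <x, grad f> + (|A|^2 + 1/2) f,
   written in terms of gradient Df and Hessian Hf; A2 is |A|^2. *)
Definition Lop (n : nat) (A2 : point -> R) (f : point -> R)
    (Df : nat -> point -> R) (Hf : nat -> nat -> point -> R) (x : point) : R :=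
  sum_lt n (fun i => Hf i i x)
  - / 2 * sum_lt n (fun i => x i * Df i x)
  + (A2 x + / 2) * f x.

(* A region Omega of a self-shrinker (here an n-dimensional flat one, so its
   points are those of R^n) is stable if there is u with L u = 0 and u > 0
   on Omega. *)
Definition stable_region (n : nat) (A2 : point -> R) (Omega : point -> Prop) : Prop :=
  exists (u : point -> R) (Du : nat -> point -> R) (H : nat -> nat -> point -> R),
    C2_on n Omega u Du H /\
    forall x, in_Rn n x -> Omega x -> Lop n A2 u Du H x = 0 /\ 0 < u x.

(* Main.v *)
From Coquelicot Require Import Coquelicot.
From Stdlib Require Import Lra Lia Psatz.
Require Import Defs.
From Stdlib Require Import Reals.
Open Scope R_scope.

Fixpoint coef (n : nat) (k : nat) : R :=
  match k with
  | O => - INR n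
  | S k => (INR k - / 2) * coef n k / ((INR k + 1) * (4 * INR k + 2 * INR n))
  end.

Lemma coef_pos n k : (1 <= n)%nat -> 0 < coef n (S k).
Proof.
  intros hn. assert (Hn : 1 <= INR n) by (apply (le_INR 1); lia).
  induction k as [|k IH].
  - simpl coef. replace (INR 0) with 0 by reflexivity.
    unfold Rdiv. apply Rmult_lt_0_compat.
    + nra.
    + apply Rinv_0_lt_compat. nra.
  - change (coef n (S (S k))) with
      ((INR (S k) - / 2) * coef n (S k) / ((INR (S k) + 1) * (4 * INR (S k) + 2 * INR n))).
    assert (H1 : 1 <= INR (S k)) by (apply (le_INR 1); lia).
    unfold Rdiv. apply Rmult_lt_0_compat.
    + nra.
    + apply Rinv_0_lt_compat. nra.
Qed.

Lemma coef_nz n k : (1 <= n)%nat -> coef n k <> 0.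
Proof.
  intros hn. destruct k.
  - simpl. assert (1 <= INR n) by (apply (le_INR 1); lia). lra.
  - apply Rgt_not_eq. apply coef_pos. exact hn.
Qed.

Lemma lim_inv : is_lim_seq (fun k => / (INR k + 1)) 0.
Proof.
  replace (Finite 0) with (Rbar_inv p_infty) by reflexivity.
  apply is_lim_seq_inv.
  - eapply is_lim_seq_plus. apply is_lim_seq_INR. apply is_lim_seq_const.
    reflexivity.
  - discriminate.
Qed.

Lemma coef_radius n : (1 <= n)%nat -> CV_radius (coef n) = p_infty.
Proof.
  intros hn. apply CV_radius_infinite_DAlembert.
  - intros k. apply coef_nz. exact hn.
  - apply is_lim_seq_le_le with (u := fun _ => 0) (w := fun k => / (INR k + 1)).
    + intros k. split. apply Rabs_pos.
      assert (Hn : 1 <= INR n) by (apply (le_INR 1); lia).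
      assert (Hk : 0 <= INR k) by apply pos_INR.
      assert (Hc := coef_nz n k hn).
      change (coef n (S k)) with
        ((INR k - / 2) * coef n k / ((INR k + 1) * (4 * INR k + 2 * INR n))).
      replace ((INR k - / 2) * coef n k / ((INR k + 1) * (4 * INR k + 2 * INR n)) / coef n k)
        with ((INR k - / 2) * (/ (INR k + 1) * / (4 * INR k + 2 * INR n))) by (field; lra).
      rewrite Rabs_mult, Rabs_mult.
      rewrite (Rabs_right (/ (INR k + 1))) by (left; apply Rinv_0_lt_compat; lra).
      rewrite (Rabs_right (/ (4 * INR k + 2 * INR n))) by (left; apply Rinv_0_lt_compat; lra).
      assert (HP : Rabs (INR k - / 2) <= INR k + 1) by (apply Rabs_le; lra).
      assert (Ha : 0 < / (INR k + 1)) by (apply Rinv_0_lt_compat; lra).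
      assert (Hb : / (4 * INR k + 2 * INR n) * (INR k + 1) <= 1).
      { apply (Rmult_le_reg_l (4 * INR k + 2 * INR n)). lra.
        rewrite <- Rmult_assoc, Rinv_r by lra. lra. }
      assert (Hb0 : 0 < / (4 * INR k + 2 * INR n)) by (apply Rinv_0_lt_compat; lra).
      assert (0 <= Rabs (INR k - / 2)) by apply Rabs_pos.
      apply Rle_trans with ((INR k + 1) * (/ (INR k + 1) * / (4 * INR k + 2 * INR n))).
      { apply Rmult_le_compat_r. nra. exact HP. }
      nra.
    + apply is_lim_seq_const.
    + apply lim_inv.
Qed.
Definition F (n : nat) (z : R) := PSeries (coef n) z.
Definition F1 (n : nat) (z : R) := PSeries (PS_derive (coef n)) z.
Definition F2 (n : nat) (z : R) := PSeries (PS_derive (PS_derive (coef n))) z.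

Lemma radius1 n : (1 <= n)%nat -> CV_radius (PS_derive (coef n)) = p_infty.
Proof. intros; rewrite CV_radius_derive; apply coef_radius; auto. Qed.
Lemma radius2 n : (1 <= n)%nat -> CV_radius (PS_derive (PS_derive (coef n))) = p_infty.
Proof. intros; rewrite !CV_radius_derive; apply coef_radius; auto. Qed.

Lemma ode n z : (1 <= n)%nat ->
  4 * z * F2 n z + 2 * INR n * F1 n z - z * F1 n z + F n z / 2 = 0.
Proof.
  intros hn.
  set (a := coef n). set (a1 := PS_derive a). set (a2 := PS_derive a1).
  assert (E0 : is_pseries a z (F n z)).
  { apply PSeries_correct, CV_radius_inside. unfold a. rewrite coef_radius; easy. }
  assert (E1 : is_pseries a1 z (F1 n z)).
  { apply PSeries_correct, CV_radius_inside. unfold a1, a. rewrite radius1; easy. }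
  assert (E2 : is_pseries a2 z (F2 n z)).
  { apply PSeries_correct, CV_radius_inside. unfold a2, a1, a. rewrite radius2; easy. }
  set (c := PS_plus (PS_plus (PS_scal 4 (PS_incr_1 a2))
              (PS_plus (PS_scal (2 * INR n) a1) (PS_scal (-1) (PS_incr_1 a1))))
              (PS_scal (/ 2) a)).
  assert (R4 : forall x : R, mult x 4 = mult 4 x) by (intros; apply Rmult_comm).
  pose proof (is_pseries_scal 4 _ z _ (R4 z) (is_pseries_incr_1 _ _ _ E2)) as T1.
  pose proof (is_pseries_scal (2 * INR n) _ z _ (Rmult_comm _ _) E1) as T2.
  pose proof (is_pseries_scal (-1) _ z _ (Rmult_comm _ _) (is_pseries_incr_1 _ _ _ E1)) as T3.
  pose proof (is_pseries_scal (/2) _ z _ (Rmult_comm _ _) E0) as T4.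
  pose proof (is_pseries_plus _ _ _ _ _ T1 (is_pseries_plus _ _ _ _ _ T2 T3)) as T5.
  pose proof (is_pseries_plus _ _ _ _ _ T5 T4) as Ec.
  apply is_pseries_unique in Ec.
  change plus with Rplus in Ec. change scal with Rmult in Ec.
  assert (Hn : 1 <= INR n) by (apply (le_INR 1); lia).
  rewrite (PSeries_ext c (fun _ => 0)) in Ec.
  - rewrite PSeries_const_0 in Ec. lra.
  - intros k. unfold c, PS_plus, PS_scal, PS_incr_1, a2, a1, PS_derive.
    change plus with Rplus. change scal with Rmult. change mult with Rmult.
    destruct k as [|m].
    + change zero with 0. unfold a. simpl coef. rewrite !S_INR. simpl INR. field. lra.
    + unfold a. change (coef n (S (S m))) with
        ((INR (S m) - / 2) * coef n (S m) / ((INR (S m) + 1) * (4 * INR (S m) + 2 * INR n))).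
      rewrite !S_INR. assert (0 <= INR m) by apply pos_INR. field. lra.
Qed.

Lemma PS_nonneg (d : nat -> R) z : 0 <= z -> (forall k, 0 <= d k) ->
  Rbar_lt (Rabs z) (CV_radius d) -> 0 <= PSeries d z.
Proof.
  intros hz hd hr.
  rewrite <- (PSeries_const_0 z).
  apply Series_le.
  - intros k. change scal with Rmult. change pow_n with pow.
    simpl. rewrite Rmult_0_l. split. lra. apply Rmult_le_pos. apply hd.
    apply pow_le; lra.
  - eapply ex_series_ext; [|apply (CV_radius_inside d z hr)].
    intros k. simpl. change scal with Rmult. change pow_n with pow. simpl. apply Rmult_comm.
Qed.

Lemma F_lower n z : (1 <= n)%nat -> 0 <= z ->
  coef n 0 + z * (coef n 1 + z * coef n 2) <= F n z.
Proof.
  intros hn hz. unfold F.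
  assert (rad : forall d, CV_radius d = p_infty -> Rbar_lt (Rabs z) (CV_radius d)).
  { intros d e; rewrite e; easy. }
  rewrite PSeries_decr_1 by (apply CV_radius_inside, rad, coef_radius; auto).
  rewrite PSeries_decr_1 by (apply CV_radius_inside, rad; rewrite CV_radius_decr_1; apply coef_radius; auto).
  rewrite PSeries_decr_1 by (apply CV_radius_inside, rad; rewrite !CV_radius_decr_1; apply coef_radius; auto).
  change (PS_decr_1 (PS_decr_1 (coef n)) 0) with (coef n 2).
  change (PS_decr_1 (coef n) 0) with (coef n 1).
  assert (0 <= PSeries (PS_decr_1 (PS_decr_1 (PS_decr_1 (coef n)))) z).
  { apply PS_nonneg; auto.
    - intros k. unfold PS_decr_1. left. apply coef_pos; auto.
    - apply rad. rewrite !CV_radius_decr_1; apply coef_radius; auto. }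
  set (P := PSeries (PS_decr_1 (PS_decr_1 (PS_decr_1 (coef n)))) z) in *.
  assert (0 <= z * (z * (z * P))) by (repeat apply Rmult_le_pos; lra).
  nra.
Qed.

Lemma coef1 n : (1 <= n)%nat -> coef n 1 = / 4.
Proof. intros hn. assert (1 <= INR n) by (apply (le_INR 1); lia). simpl. field. lra. Qed.
Lemma coef2 n : (1 <= n)%nat -> coef n 2 = / (32 * (INR n + 2)).
Proof. intros hn. assert (1 <= INR n) by (apply (le_INR 1); lia). simpl. field. lra. Qed.

Lemma F_deriv n z : (1 <= n)%nat -> derivable_pt_lim (F n) z (F1 n z).
Proof.
  intros hn. apply is_derive_Reals. unfold F, F1. apply is_derive_PSeries.
  rewrite coef_radius; easy.
Qed.
Lemma F1_deriv n z : (1 <= n)%nat -> derivable_pt_lim (F1 n) z (F2 n z).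
Proof.
  intros hn. apply is_derive_Reals. unfold F1, F2. apply is_derive_PSeries.
  rewrite radius1; easy.
Qed.

Lemma cont_pt_of_deriv (h : R -> R) z l : derivable_pt_lim h z l -> continuity_pt h z.
Proof.
  intros H. apply continuity_pt_filterlim. apply is_derive_Reals in H.
  exact (ex_derive_continuous (K:=R_AbsRing) (V:=R_NormedModule) h z (ex_intro _ l H)).
Qed.

Lemma sum_lt_ext m f g : (forall i, (i < m)%nat -> f i = g i) -> sum_lt m f = sum_lt m g.
Proof.
  induction m; intros H; simpl. reflexivity.
  rewrite IHm by (intros; apply H; lia). rewrite H by lia. reflexivity.
Qed.

Lemma sum_lt_lin m c d f : sum_lt m (fun i => c + d * f i) = INR m * c + d * sum_lt m f.
Proof.
  induction m; simpl sum_lt. simpl. ring.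
  rewrite IHm, S_INR. ring.
Qed.

Lemma sum_lt_nonneg m f : (forall k, 0 <= f k) -> 0 <= sum_lt m f.
Proof. intros H; induction m; simpl. lra. specialize (H m). lra. Qed.

Lemma sum_ge_term m f i : (forall k, 0 <= f k) -> (i < m)%nat -> f i <= sum_lt m f.
Proof.
  intros H; induction m; intros Hi. lia. simpl.
  destruct (Nat.eq_dec i m) as [->|Hne].
  - pose proof (sum_lt_nonneg m f H). lra.
  - specialize (IHm ltac:(lia)). specialize (H m). lra.
Qed.

Lemma inner_nonneg m x : 0 <= inner m x x.
Proof. apply sum_lt_nonneg. intros k. apply Rle_0_sqr. Qed.

Lemma coord_le_norm n (z : point) i : (i < n)%nat -> Rabs (z i) <= norm n z.
Proof.
  intros Hi. unfold norm, inner. rewrite <- sqrt_Rsqr_abs.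
  apply sqrt_le_1_alt. unfold Rsqr.
  apply (sum_ge_term n (fun k => z k * z k)); auto. intros k. apply Rle_0_sqr.
Qed.

Lemma inner_shift m x j t :
  inner m (shift x j t) (shift x j t) =
  inner m x x + (if Nat.ltb j m then 2 * t * x j + t * t else 0).
Proof.
  unfold inner. induction m; simpl. lra.
  rewrite IHm. unfold shift.
  destruct (Nat.eqb m j) eqn:E.
  - apply Nat.eqb_eq in E. subst m.
    replace (Nat.ltb j j) with false by (symmetry; apply Nat.ltb_irrefl).
    replace (Nat.ltb j (S j)) with true by (symmetry; apply Nat.ltb_lt; lia). ring.
  - apply Nat.eqb_neq in E.
    destruct (Nat.ltb j m) eqn:E1.
    + apply Nat.ltb_lt in E1. replace (Nat.ltb j (S m)) with true by (symmetry; apply Nat.ltb_lt; lia). ring.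
    + apply Nat.ltb_ge in E1. replace (Nat.ltb j (S m)) with false by (symmetry; apply Nat.ltb_ge; lia). ring.
Qed.

Lemma shift_coord x j t i :
  shift x j t i = x i + (if Nat.eqb i j then 1 else 0) * t.
Proof. unfold shift. destruct (Nat.eqb i j); simpl; ring. Qed.

Lemma deriv_g (r a : R) : derivable_pt_lim (fun t => r + 2 * t * a + t * t) 0 (2 * a).
Proof.
  apply is_derive_Reals.
  auto_derive. auto. ring.
Qed.

Lemma cont_ext n f g x : (forall y, f y = g y) -> cont_at n f x -> cont_at n g x.
Proof.
  intros E H eps Heps. destruct (H eps Heps) as [d [Hd Hy]].
  exists d; split; auto. intros y Hy1 Hy2. rewrite <- !E. auto.
Qed.

Lemma cont_const n c x : cont_at n (fun _ => c) x.
Proof. intros eps He. exists 1; split. lra. intros. rewrite Rminus_diag, Rabs_R0. lra. Qed.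

Lemma cont_coord n i x : (i < n)%nat -> cont_at n (fun y => y i) x.
Proof.
  intros Hi eps He. exists eps; split; auto. intros y _ Hy.
  eapply Rle_lt_trans; [|exact Hy]. apply (coord_le_norm n (fun k => y k - x k) i Hi).
Qed.

Lemma cont_plus n f g x : cont_at n f x -> cont_at n g x -> cont_at n (fun y => f y + g y) x.
Proof.
  intros Hf Hg eps He.
  destruct (Hf (eps/2) ltac:(lra)) as [d1 [Hd1 H1]].
  destruct (Hg (eps/2) ltac:(lra)) as [d2 [Hd2 H2]].
  exists (Rmin d1 d2); split. apply Rmin_pos; auto.
  intros y Hy Hn.
  assert (A1 := H1 y Hy ltac:(eapply Rlt_le_trans; [exact Hn| apply Rmin_l])).
  assert (A2 := H2 y Hy ltac:(eapply Rlt_le_trans; [exact Hn| apply Rmin_r])).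
  replace (f y + g y - (f x + g x)) with ((f y - f x) + (g y - g x)) by ring.
  eapply Rle_lt_trans. apply Rabs_triang. lra.
Qed.

Lemma cont_comp n f h x : cont_at n f x -> continuity_pt h (f x) -> cont_at n (fun y => h (f y)) x.
Proof.
  intros Hf Hh eps He.
  destruct (Hh eps He) as [d [Hd Hd2]].
  destruct (Hf d Hd) as [d' [Hd' H']].
  exists d'; split; auto. intros y Hy Hn.
  destruct (Req_dec (f y) (f x)) as [E|E].
  - rewrite E, Rminus_diag, Rabs_R0. lra.
  - apply (Hd2 (f y)). split. split. exact I. auto. simpl. unfold Rdist. auto.
Qed.

Lemma cont_mult n f g x : cont_at n f x -> cont_at n g x -> cont_at n (fun y => f y * g y) x.
Proof.
  intros Hf Hg.
  assert (Hsq : forall z, continuity_pt (fun v => v * v / 4) z).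
  { intros z. eapply cont_pt_of_deriv. apply is_derive_Reals.
    auto_derive. auto. reflexivity. }
  assert (Hneg : forall z, continuity_pt (fun v => - v) z).
  { intros z. eapply cont_pt_of_deriv. apply is_derive_Reals.
    auto_derive. auto. reflexivity. }
  apply cont_ext with (f := fun y => (fun v => v * v / 4) (f y + g y)
     + (fun v => - v) ((fun v => v * v / 4) (f y + (fun v => - v) (g y)))).
  { intros y. simpl. field. }
  apply cont_plus.
  - apply (cont_comp n (fun y => f y + g y) (fun v => v * v / 4)); auto. apply cont_plus; auto.
  - apply (cont_comp n (fun y => (fun v => v * v / 4) (f y + (fun v => - v) (g y))) (fun v => - v)); auto.
    apply (cont_comp n (fun y => f y + (fun v => - v) (g y)) (fun v => v * v / 4)); auto.
    apply cont_plus; auto. apply (cont_comp n g (fun v => - v)); auto.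
Qed.

Lemma cont_inner n x : cont_at n (fun y => inner n y y) x.
Proof.
  unfold inner.
  assert (forall m, (m <= n)%nat -> cont_at n (fun y => sum_lt m (fun i => y i * y i)) x).
  { induction m; intros Hm; simpl.
    - apply cont_const.
    - apply cont_plus. apply IHm; lia. apply cont_mult; apply cont_coord; lia. }
  auto.
Qed.

Theorem proposition4p16 (n : nat) (hn : (2 <= n)%nat) :
  stable_region n (fun _ => 0)
    (fun x => norm n x >
       2 * sqrt (INR (n + 2) * (sqrt (INR (3 * n + 2) / INR (n + 2)) - 1))).
Proof.
  assert (hn1 : (1 <= n)%nat) by lia.
  exists (fun x => F n (inner n x x)), (fun j x => 2 * x j * F1 n (inner n x x)),
    (fun i j x => 2 * (if Nat.eqb i j then 1 else 0) * F1 n (inner n x x)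
                  + 2 * x i * (2 * x j * F2 n (inner n x x))).
  split.
  - intros x Hx Hreg. repeat split.
    + intros j Hj. unfold has_partial. apply is_derive_Reals.
      apply is_derive_ext with (f := fun t => F n (inner n x x + 2 * t * x j + t * t)).
      { intros t. rewrite inner_shift. replace (Nat.ltb j n) with true by (symmetry; apply Nat.ltb_lt; auto). f_equal. ring. }
      auto_derive.
      * apply ex_derive_Reals_1. exists (F1 n (inner n x x + 2 * 0 * x j + 0 * 0)). apply F_deriv; auto.
      * rewrite (is_derive_unique (F n) _ (F1 n (inner n x x + 2 * 0 * x j + 0 * 0))).
        replace (inner n x x + 2 * 0 * x j + 0 * 0) with (inner n x x) by ring. ring.
        apply is_derive_Reals, F_deriv; auto.
    + intros i j Hi Hj. unfold has_partial. apply is_derive_Reals.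
      apply is_derive_ext with (f := fun t => 2 * (x i + (if Nat.eqb i j then 1 else 0) * t) * F1 n (inner n x x + 2 * t * x j + t * t)).
      { intros t. rewrite inner_shift, shift_coord. replace (Nat.ltb j n) with true by (symmetry; apply Nat.ltb_lt; auto). f_equal. f_equal. ring. }
      auto_derive.
      * apply ex_derive_Reals_1. exists (F2 n (inner n x x + 2 * 0 * x j + 0 * 0)). apply F1_deriv; auto.
      * rewrite (is_derive_unique (F1 n) _ (F2 n (inner n x x + 2 * 0 * x j + 0 * 0))).
        replace (inner n x x + 2 * 0 * x j + 0 * 0) with (inner n x x) by ring. ring.
        apply is_derive_Reals, F1_deriv; auto.
    + apply (cont_comp n (fun y => inner n y y) (F n)). apply cont_inner.
      eapply cont_pt_of_deriv. apply F_deriv; auto.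
    + intros i Hi. apply cont_mult. apply cont_mult. apply cont_const. apply cont_coord; auto.
      apply (cont_comp n (fun y => inner n y y) (F1 n)). apply cont_inner.
      eapply cont_pt_of_deriv. apply F1_deriv; auto.
    + intros i j Hi Hj. apply cont_plus.
      * apply cont_mult. apply cont_const.
        apply (cont_comp n (fun y => inner n y y) (F1 n)). apply cont_inner.
        eapply cont_pt_of_deriv. apply F1_deriv; auto.
      * apply cont_mult. apply cont_mult. apply cont_const. apply cont_coord; auto.
        apply cont_mult. apply cont_mult. apply cont_const. apply cont_coord; auto.
        apply (cont_comp n (fun y => inner n y y) (F2 n)). apply cont_inner.
        unfold F2. eapply cont_pt_of_deriv. apply is_derive_Reals. apply is_derive_PSeries.
        rewrite radius2; easy.
  - intros x Hx Hreg. set (rho := inner n x x).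
    split.
    + unfold Lop.
      rewrite (sum_lt_ext n _ (fun i => 2 * F1 n rho + (4 * F2 n rho) * (x i * x i))).
      2:{ intros i Hi. cbv beta. rewrite Nat.eqb_refl. unfold rho. ring. }
      rewrite (sum_lt_ext n (fun i => x i * (2 * x i * F1 n (inner n x x))) (fun i => 0 + (2 * F1 n rho) * (x i * x i))).
      2:{ intros i Hi. cbv beta. unfold rho. ring. }
      rewrite !sum_lt_lin. change (sum_lt n (fun i => x i * x i)) with rho.
      eapply eq_trans; [|exact (ode n rho hn1)]. unfold rho. field.
    + assert (Hr0 : 0 <= rho) by apply inner_nonneg.
      pose proof (F_lower n rho hn1 Hr0) as HL.
      rewrite coef1, coef2 in HL by auto. simpl coef in HL.
      unfold norm in Hreg. fold rho in Hreg.
      assert (HN : 2 <= INR n) by (apply (le_INR 2); auto).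
      rewrite !plus_INR, mult_INR in Hreg.
      replace (INR 2) with 2 in Hreg by (simpl; ring). replace (INR 3) with 3 in Hreg by (simpl; ring).
      set (s := sqrt ((3 * INR n + 2) / (INR n + 2))) in Hreg.
      assert (Hs2 : s * s = (3 * INR n + 2) / (INR n + 2)).
      { unfold s. apply sqrt_sqrt. apply Rdiv_le_0_compat; lra. }
      assert (Hs1 : 1 <= s).
      { unfold s. rewrite <- sqrt_1. apply sqrt_le_1_alt.
        apply (Rmult_le_reg_r (INR n + 2)). lra.
        unfold Rdiv. rewrite Rmult_assoc, Rinv_l by lra. lra. }
      assert (HsN : s * s * (INR n + 2) = 3 * INR n + 2).
      { rewrite Hs2. field. lra. }
      set (R2 := (INR n + 2) * (s - 1)) in Hreg.
      assert (HR2 : 0 <= R2) by (unfold R2; nra).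
      assert (Hlt : 4 * R2 < rho).
      { assert (E1 : sqrt (4 * R2) = 2 * sqrt R2).
        { rewrite sqrt_mult by lra. replace 4 with (2 * 2) by ring. rewrite sqrt_square; lra. }
        rewrite <- E1 in Hreg. apply sqrt_lt_0_alt in Hreg. exact Hreg. }
      assert (Hq : 0 < - INR n + rho * (/ 4 + rho * / (32 * (INR n + 2)))).
      { assert (E : - INR n + 4 * R2 * (/ 4 + 4 * R2 * / (32 * (INR n + 2))) = 0).
        { unfold R2. field_simplify; [|lra]. 
          replace (64 * INR n * s ^ 2 - 192 * INR n + 128 * s ^ 2 - 128)
            with (64 * (s * s * (INR n + 2)) - 192 * INR n - 128) by ring.
          rewrite HsN. field. }
        set (c := / (32 * (INR n + 2))) in *.
        assert (Hc : 0 < c) by (apply Rinv_0_lt_compat; lra).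
        assert (Hsq : 4 * R2 * (4 * R2) < rho * rho) by nra.
        assert (0 < c * (rho * rho - 4 * R2 * (4 * R2))) by (apply Rmult_lt_0_compat; lra).
        nra. }
      lra.
Qed.
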